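(* Let $n\geq 1$ be an integer, let $\Omega_s\subseteq[-1,1]$ be a Lebesgue measurable set of Lebesgue measure $s\geq 0$ such that $\zeta=\max\{|x|: x\in\Omega_s\}$ exists, and suppose $1-\zeta\geq 1/n$. Then for every real polynomial $p$ of degree $\leq n$, \[ \int_{\Omega_s}|p(x)|\,dx\leq\frac{s\,n^{3/2}}{(1-\zeta^2)^{1/4}}\int_{-1}^1|p(x)|\,dx . \] *)

(* Defs.v *)
From HB Require Import structures.
From mathcomp Require Import all_boot all_order all_algebra.
From mathcomp Require Import all_classical all_reals all_analysis.
Set Implicit Arguments. Unset Strict Implicit. Unset Printing Implicit Defensive.

(* Main.v *)
Require Import Defs.
From HB Require Import structures.
From mathcomp Require Import all_boot all_order all_algebra.
From mathcomp Require Import all_classical all_reals all_analysis.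
From mathcomp Require Import ring lra zify.
Import Order.TTheory GRing.Theory Num.Theory.
Import numFieldNormedType.Exports.
Local Open Scope classical_set_scope.
Local Open Scope ring_scope.

Section S.
Context {R : realType}.
Notation mu := (@lebesgue_measure R).

Lemma cint (f : R -> R) a b : continuous f -> mu.-integrable `[a,b] (EFin \o f).
Proof.
move=> cf; apply: continuous_compact_integrable; first exact: segment_compact.
by apply: continuous_subspaceT.
Qed.

Lemma FTCR {f F : R -> R} {a b : R} : a < b -> continuous f ->
  (forall x : R, is_derive x (1:R) F (f x)) ->
  \int[mu]_(x in `[a,b]) f x = F b - F a.
Proof.
move=> ab cf dF.
have cF : continuous F.
  by move=> x; apply/differentiable_continuous/derivable1_diffP; exact: ex_derive.
rewrite /Rintegral (@continuous_FTC2 _ f F a b ab) //.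
- by apply: continuous_subspaceT.
- split.
  + by move=> x _; exact: ex_derive.
  + exact/cvg_at_right_filter/cF.
  + exact/cvg_at_left_filter/cF.
- by move=> x _; rewrite derive1E derive_val.
Qed.


Lemma sin_natpi (k : nat) : sin (k%:R * pi) = 0 :> R.
Proof.
elim: k => [|k IH]; first by rewrite mul0r sin0.
by rewrite -addn1 natrD mulrDl mul1r sinDpi IH oppr0.
Qed.

Lemma isdM {f g : R -> R} {x df dg : R} : is_derive x 1 f df -> is_derive x 1 g dg ->
  is_derive x 1 (fun y => f y * g y) (f x * dg + g x * df).
Proof. by move=> H1 H2; have := is_deriveM H1 H2. Qed.

Lemma isdD {f g : R -> R} {x df dg : R} : is_derive x 1 f df -> is_derive x 1 g dg ->
  is_derive x 1 (fun y => f y + g y) (df + dg).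
Proof. by move=> H1 H2; have := is_deriveD H1 H2. Qed.

Lemma isdB {f g : R -> R} {x df dg : R} : is_derive x 1 f df -> is_derive x 1 g dg ->
  is_derive x 1 (fun y => f y - g y) (df - dg).
Proof. by move=> H1 H2; have := is_deriveB H1 H2. Qed.

Lemma isdZ {f : R -> R} (c : R) {x df : R} : is_derive x 1 f df ->
  is_derive x 1 (fun y => c * f y) (c * df).
Proof. by move=> H1; have := is_deriveZ c H1. Qed.

Lemma isdid (x : R) : is_derive x 1 (fun y : R => y) 1.
Proof. exact: is_derive_id. Qed.

Lemma isd_sinM (a x : R) : is_derive x 1 (fun y => sin (a * y)) (cos (a * x) * a).
Proof.
have H : is_derive x 1 (fun y : R => a * y) a := is_derive_eq (isdZ a (isdid x)) (mulr1 a).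
by have := is_derive1_comp (is_derive_sin (a * x)) H.
Qed.

Lemma isd_cosM (a x : R) : is_derive x 1 (fun y => cos (a * y)) (- sin (a * x) * a).
Proof.
have H : is_derive x 1 (fun y : R => a * y) a := is_derive_eq (isdZ a (isdid x)) (mulr1 a).
by have := is_derive1_comp (is_derive_cos (a * x)) H.
Qed.


Lemma cont_isd (f df : R -> R) : (forall x : R, is_derive x (1:R) f (df x)) -> continuous f.
Proof.
by move=> H x; apply/differentiable_continuous/derivable1_diffP; exact: ex_derive.
Qed.

Lemma cont_sinsin (a b : R) : continuous (fun x => sin (a * x) * sin (b * x)).
Proof. by apply: (@cont_isd _ (fun x => _)) => x; apply: isdM; apply: isd_sinM. Qed.

Lemma orth_ne (a b : R) : a ^+ 2 != b ^+ 2 -> sin (a * pi) = 0 -> sin (b * pi) = 0 ->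
  \int[mu]_(x in `[0, pi]) (sin (a * x) * sin (b * x)) = 0.
Proof.
move=> ab sa sb.
pose F y := (a ^+ 2 - b ^+ 2)^-1 * (b * (sin (a * y) * cos (b * y)) - a * (cos (a * y) * sin (b * y))).
have dF : forall x : R, is_derive x (1:R) F (sin (a * x) * sin (b * x)).
  move=> x; apply: (is_derive_eq (isdZ _ (isdB (isdZ b (isdM (isd_sinM a x) (isd_cosM b x))) (isdZ a (isdM (isd_cosM a x) (isd_sinM b x)))))).
  by field; rewrite subr_eq0.
rewrite (FTCR (@pi_gt0 R) (cont_sinsin a b) dF).
by rewrite /F !mulr0 sin0 sa sb !(mul0r,mulr0,subrr).
Qed.

Lemma orth_eq (a : R) : a != 0 -> sin (a * pi) = 0 ->
  \int[mu]_(x in `[0, pi]) (sin (a * x) * sin (a * x)) = pi / 2.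
Proof.
move=> a0 sa.
pose F y := 2^-1 * y - (2 * a)^-1 * (sin (a * y) * cos (a * y)).
have dF : forall x : R, is_derive x (1:R) F (sin (a * x) * sin (a * x)).
  move=> x; apply: (is_derive_eq (isdB (isdZ _ (isdid x)) (isdZ _ (isdM (isd_sinM a x) (isd_cosM a x))))).
  have h := cos2Dsin2 (a * x).
  apply/eqP; rewrite -subr_eq0.
  have -> : 2^-1 * 1 - (2 * a)^-1 * (sin (a * x) * (- sin (a * x) * a) + cos (a * x) * (cos (a * x) * a)) -
    sin (a * x) * sin (a * x) = - 2^-1 * (cos (a * x) ^+ 2 + sin (a * x) ^+ 2 - 1).
    by field.
  by rewrite h subrr mulr0.
rewrite (FTCR (@pi_gt0 R) (cont_sinsin a a) dF).
by rewrite /F !mulr0 sin0 sa !(mul0r,mulr0,subr0) mulrC.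
Qed.

Lemma orth (j k : nat) : \int[mu]_(x in `[0, pi]) (sin (j.+1%:R * x) * sin (k.+1%:R * x)) =
  if j == k then pi / 2 else 0.
Proof.
case: eqP => [<-|jk].
  by apply: orth_eq; [rewrite pnatr_eq0 | exact: sin_natpi].
apply: orth_ne; try exact: sin_natpi.
rewrite -!natrX eqr_nat; apply/negP => /eqP h; apply: jk.
have : (j.+1 ^ 2 == k.+1 ^ 2)%N by rewrite h.
by rewrite eqn_exp2r // => /eqP [].
Qed.


Lemma cont_mul (f g : R -> R) : continuous f -> continuous g -> continuous (fun x => f x * g x).
Proof. by move=> cf cg x; apply: continuousM; [exact: cf|exact: cg]. Qed.

Lemma cont_cst (c : R) : continuous (fun _ : R => c).
Proof. by move=> x; exact: cst_continuous. Qed.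

Lemma cont_sinl (a : R) : continuous (fun x => sin (a * x)).
Proof. by apply: (@cont_isd _ (fun x => _)) => x; apply: isd_sinM. Qed.

Lemma cont_sum (I : Type) (r : seq I) (F : I -> R -> R) :
  (forall i, continuous (F i)) -> continuous (fun x => \sum_(i <- r) F i x).
Proof.
move=> cF; elim: r => [|h t IH].
  have -> : (fun x => \sum_(i <- [::]) F i x) = (fun _ => 0).
    by apply/funext => x; rewrite big_nil.
  exact: cont_cst.
have -> : (fun x => \sum_(i <- h :: t) F i x) = (fun x => F h x + \sum_(i <- t) F i x).
  by apply/funext => x; rewrite big_cons.
by move=> x; apply: continuousD; [exact: cF|exact: IH].
Qed.

Lemma Rint_sum (I : Type) (r : seq I) (F : I -> R -> R) (a b : R) :
  (forall i, continuous (F i)) ->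
  \int[mu]_(x in `[a, b]) (\sum_(i <- r) F i x) = \sum_(i <- r) \int[mu]_(x in `[a, b]) F i x.
Proof.
move=> cF; elim: r => [|h t IH].
  under eq_Rintegral do rewrite big_nil.
  by rewrite Rintegral_cst // mul0r big_nil.
under eq_Rintegral do rewrite big_cons.
rewrite big_cons RintegralD //; first by rewrite IH.
- exact: cint.
- by apply: cint; apply: cont_sum.
Qed.

Definition Dk (N : nat) (t0 x : R) := \sum_(j < N) sin (j.+1%:R * t0) * sin (j.+1%:R * x).

Lemma cont_Dk N t0 : continuous (Dk N t0).
Proof.
apply: cont_sum => j; apply: cont_mul; [exact: cont_cst|exact: cont_sinl].
Qed.

Lemma good_basis N t0 (k : 'I_N) :
  \int[mu]_(x in `[0, pi]) (sin (k.+1%:R * x) * Dk N t0 x) = pi / 2 * sin (k.+1%:R * t0).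
Proof.
under eq_Rintegral do rewrite /Dk mulr_sumr.
rewrite Rint_sum; last first.
  move=> j; apply: cont_mul; first exact: cont_sinl.
  by apply: cont_mul; [exact: cont_cst|exact: cont_sinl].
transitivity (\sum_(j < N) sin (j.+1%:R * t0) * (if (k : nat) == j then pi / 2 else 0)).
  apply: eq_bigr => j _; rewrite -orth -RintegralZl //; last by apply: cint; apply: cont_sinsin.
  by apply: eq_Rintegral => x _; rewrite mulrCA.
rewrite (bigD1 k) //= eqxx big1 ?addr0; first by rewrite mulrC.
move=> j jk; case: eqP => [h|]; last by rewrite mulr0.
by move: jk; rewrite (_ : j = k) ?eqxx //; apply: val_inj.
Qed.

Lemma good N t0 (b : nat -> R) :
  \int[mu]_(x in `[0, pi]) ((\sum_(k < N) b k * sin (k.+1%:R * x)) * Dk N t0 x) =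
  pi / 2 * \sum_(k < N) b k * sin (k.+1%:R * t0).
Proof.
under eq_Rintegral do rewrite mulr_suml.
rewrite Rint_sum; last first.
  move=> j; apply: cont_mul; last exact: cont_Dk.
  by apply: cont_mul; [exact: cont_cst|exact: cont_sinl].
transitivity (\sum_(k < N) b k * (pi / 2 * sin (k.+1%:R * t0))).
  apply: eq_bigr => j _; rewrite -good_basis -RintegralZl //; last first.
    by apply: cint; apply: cont_mul; [exact: cont_sinl|exact: cont_Dk].
  by apply: eq_Rintegral => x _; rewrite mulrA.
by rewrite mulr_sumr; apply: eq_bigr => k _; rewrite mulrCA.
Qed.


Definition RepS (N : nat) (f : R -> R) := exists b : nat -> R,
  (forall k, (N <= k)%N -> b k = 0) /\ forall x, f x = \sum_(k < N) b k * sin (k.+1%:R * x).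

Lemma rep_ext {N} {f g : R -> R} : (forall x, f x = g x) -> RepS N f -> RepS N g.
Proof. by move=> fg [b [hb hf]]; exists b; split => // x; rewrite -fg. Qed.

Lemma rep0 N : RepS N (fun _ => 0).
Proof. by exists (fun _ => 0); split => // x; rewrite big1 // => k _; rewrite mul0r. Qed.

Lemma rep_add {N} {f g : R -> R} : RepS N f -> RepS N g -> RepS N (fun x => f x + g x).
Proof.
move=> [b [hb hf]] [b' [hb' hg]]; exists (fun k => b k + b' k); split.
  by move=> k hk; rewrite hb // hb' // addr0.
by move=> x; rewrite hf hg -big_split; apply: eq_bigr => k _; rewrite mulrDl.
Qed.

Lemma rep_sin M (c : R) : RepS M.+1 (fun x => c * sin x).
Proof.
exists (fun k => if k == 0%N then c else 0); split.
  by move=> [|k].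
move=> x; rewrite big_ord_recl /= mul1r big1 ?addr0 // => i _; by rewrite mul0r.
Qed.

Lemma sin_rec (k : nat) (x : R) :
  cos x * sin (k.+1%:R * x) = (sin (k.+2%:R * x) + sin (k%:R * x)) / 2.
Proof.
have e1 : k.+2%:R * x = k.+1%:R * x + x by rewrite -[k.+2]addn1 natrD mulrDl mul1r.
have e2 : k%:R * x = k.+1%:R * x - x by rewrite -[k.+1]addn1 natrD mulrDl mul1r addrK.
by rewrite e1 e2 sinD sinB; field.
Qed.

Definition shb (b : nat -> R) (k : nat) := if k is k'.+1 then b k' else 0.

Lemma rep_cos {M} {f : R -> R} : RepS M f -> RepS M.+1 (fun x => cos x * f x).
Proof.
move=> [b [hb hf]].
exists (fun k => (shb b k + b k.+1) / 2); split.
  by move=> [|k] // hk; rewrite /shb (hb k) ?(hb k.+2) ?addr0 ?mul0r //; lia.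
move=> x; rewrite hf mulr_sumr.
have -> : \sum_(i < M) cos x * (b i * sin (i.+1%:R * x)) =
   (\sum_(i < M) b i * sin (i.+2%:R * x) + \sum_(i < M) b i * sin (i%:R * x)) / 2.
  rewrite -big_split /= mulr_suml; apply: eq_bigr => i _.
  by rewrite mulrCA sin_rec; field.
have -> : \sum_(k < M.+1) (shb b k + b k.+1) / 2 * sin (k.+1%:R * x) =
   (\sum_(k < M.+1) shb b k * sin (k.+1%:R * x) +
    \sum_(k < M.+1) b k.+1 * sin (k.+1%:R * x)) / 2.
  by rewrite -big_split /= mulr_suml; apply: eq_bigr => i _; field.
congr (_ / 2); rewrite big_ord_recl /= /shb mul0r add0r; congr (_ + _).
rewrite big_ord_recr /= hb // mul0r addr0.
case: M hb hf => [|M] hb hf; first by rewrite !big_ord0.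
rewrite big_ord_recl /= mul0r sin0 mulr0 add0r.
under eq_bigr do rewrite /bump add1n.
by rewrite big_ord_recr /= hb // mul0r addr0.
Qed.

Lemma rep_poly (p : {poly R}) : forall N, (size p <= N)%N ->
  RepS N (fun x => p.[cos x] * sin x).
Proof.
elim/poly_ind: p => [|p c IH] N hN.
  by apply: (rep_ext _ (rep0 N)) => x; rewrite horner0 mul0r.
case: N hN => [|M] hN.
  move: hN; rewrite leqn0 size_poly_eq0 => /eqP ->.
  by apply: (rep_ext _ (rep0 _)) => x; rewrite horner0 mul0r.
have hp : (size p <= M)%N.
  move: hN; rewrite size_MXaddC; case: (p == 0) /eqP => [->|_] //=.
  by rewrite size_poly0.
apply: (rep_ext _ (rep_add (rep_cos (IH M hp)) (rep_sin M c))) => x.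
by rewrite hornerMXaddC; ring.
Qed.


Lemma cont_pcos (p : {poly R}) : continuous (fun x => p.[cos x]).
Proof. by move=> x; apply: continuous_comp; [exact: continuous_cos|exact: continuous_horner]. Qed.

Lemma cont_abs (f : R -> R) : continuous f -> continuous (fun x => `|f x|).
Proof. by move=> cf x; apply: continuous_comp; [exact: cf|exact: norm_continuous]. Qed.

Lemma Dk_le N t0 x : `|Dk N t0 x| <= N%:R.
Proof.
rewrite /Dk; apply: le_trans (ler_norm_sum _ _ _) _.
apply: le_trans (_ : \sum_(j < N) (1 : R) <= _); last by rewrite sumr_const card_ord.
apply: ler_sum => j _; rewrite normrM mulr_ile1 //; exact: sin_max.
Qed.

Lemma pointwise (p : {poly R}) (n : nat) (x0 : R) : (size p <= n.+1)%N -> -1 <= x0 <= 1 ->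
  pi / 2 * (`|p.[x0]| * sin (acos x0)) <=
  n.+1%:R * \int[mu]_(x in `[0, pi]) (`|p.[cos x]| * sin x).
Proof.
move=> hs hx.
have ct0 : cos (acos x0) = x0 by rewrite acosK // in_itv /=.
have st0 : 0 <= sin (acos x0) by apply: sin_ge0_pi; rewrite acos_ge0 // acos_lepi.
have [b [_ hb]] := rep_poly p _ hs.
have key : \int[mu]_(x in `[0, pi]) (p.[cos x] * sin x * Dk n.+1 (acos x0) x) =
    pi / 2 * (p.[x0] * sin (acos x0)).
  transitivity (\int[mu]_(x in `[0, pi])
      ((\sum_(k < n.+1) b k * sin (k.+1%:R * x)) * Dk n.+1 (acos x0) x)).
    by apply: eq_Rintegral => x _; rewrite hb.
  by rewrite good -hb ct0.
have cf : continuous (fun x => p.[cos x] * sin x * Dk n.+1 (acos x0) x).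
  by apply: cont_mul; [apply: cont_mul; [exact: cont_pcos|exact: continuous_sin]|exact: cont_Dk].
have -> : pi / 2 * (`|p.[x0]| * sin (acos x0)) =
    `|pi / 2 * (p.[x0] * sin (acos x0))|.
  by rewrite !normrM (ger0_norm st0) (ger0_norm (@pi_ge0 R)) normfV (@ger0_norm _ 2)...
rewrite -key; apply: le_trans; first (apply: le_normr_Rintegral => //; exact: cint).
rewrite -RintegralZl //; last first.
  by apply: cint; apply: cont_mul; [apply: cont_abs; exact: cont_pcos|exact: continuous_sin].
apply: le_Rintegral => //.
- by apply: cint; apply: cont_abs.
- apply: cint; apply: cont_mul; first exact: cont_cst.
  by apply: cont_mul; [apply: cont_abs; exact: cont_pcos|exact: continuous_sin].
move=> x /= hx'.
have sx : 0 <= sin x.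
  by apply: sin_ge0_pi; move: hx'; rewrite in_itv /= => /andP [-> ->].
rewrite !normrM (ger0_norm sx) [X in _ <= X]mulrC ler_wpM2l ?mulr_ge0 //; exact: Dk_le.
Qed.


Lemma dcos : (@cos R)^`()%classic = (fun x => -1 * sin x).
Proof. by apply/funext => x; rewrite derive1E derive_val mulN1r. Qed.

Lemma cont_dcos : continuous (fun x : R => -1 * sin x).
Proof. by apply: cont_mul; [exact: cont_cst|exact: continuous_sin]. Qed.

Lemma subst_cos (p : {poly R}) :
  (\int[mu]_(x in `[0, pi]) (`|p.[cos x]| * sin x))%:E =
  (\int[mu]_(x in `[(-1)%R, 1%R]) (`|p.[x]|)%:E)%E.
Proof.
have := @integration_by_substitution_decreasing R cos (fun x => `|p.[x]|) 0 pi (@pi_ge0 R).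
rewrite cospi cos0 => ->.
- rewrite /Rintegral fineK; last first.
    apply: integrable_fin_num => //; apply: cint.
    by apply: cont_mul; [apply: cont_abs; exact: cont_pcos|exact: continuous_sin].
  apply: eq_integral => x _; rewrite dcos /=.
  by congr EFin; rewrite !fctE /= mulN1r opprK.
- by move=> x y hx hy xy; rewrite ltr_cos.
- by rewrite dcos => x _; exact: cont_dcos.
- by rewrite dcos; apply/cvg_ex; exists (-1 * sin 0); apply: cvg_at_right_filter; exact: cont_dcos.
- by rewrite dcos; apply/cvg_ex; exists (-1 * sin pi); apply: cvg_at_left_filter; exact: cont_dcos.
- split.
  + by move=> x _; exact: ex_derive.
  + exact/cvg_at_right_filter/continuous_cos.
  + exact/cvg_at_left_filter/continuous_cos.
- by apply: continuous_subspaceT; apply: cont_abs; exact: continuous_horner.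
Qed.


Lemma isdc (c x : R) : is_derive x (1:R) (fun _ : R => c) 0.
Proof. exact: is_derive_cst. Qed.

Lemma pi_ge : 14 / 5 <= (pi : R).
Proof.
pose F (y : R) := 2^-1 * y - 2^-1 * (sin y * cos y) + (3 / 2) * cos y + (9 / 16) * y.
have dF : forall x : R, is_derive x (1:R) F ((sin x - 3 / 4) * (sin x - 3 / 4)).
  move=> x; apply: (is_derive_eq (isdD (isdD (isdB (isdZ _ (isdid x))
    (isdZ _ (isdM (is_derive_sin x) (is_derive_cos x)))) (isdZ _ (is_derive_cos x))) (isdZ _ (isdid x)))).
  have h := cos2Dsin2 x.
  apply/eqP; rewrite -subr_eq0.
  have -> : 2^-1 * 1 - 2^-1 * (sin x * - sin x + cos x * cos x) + 3 / 2 * - sin x + 9 / 16 * 1 -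
    (sin x - 3 / 4) * (sin x - 3 / 4) = - 2^-1 * (cos x ^+ 2 + sin x ^+ 2 - 1).
    by field.
  by rewrite h subrr mulr0.
have cf : continuous (fun x : R => (sin x - 3 / 4) * (sin x - 3 / 4)).
  have c1 : continuous (fun x : R => sin x - 3 / 4).
    exact: (@cont_isd _ (fun x => cos x - 0)) (fun x => isdB (is_derive_sin x) (isdc _ x)).
  exact: cont_mul.
have := @Rintegral_ge0 _ _ R mu `[0, pi] (fun x : R => (sin x - 3 / 4) * (sin x - 3 / 4)).
rewrite (FTCR (@pi_gt0 R) cf dF) /F sinpi cospi sin0 cos0.
have pg := @pi_ge2 R.
have H0 : forall x : R, `[0, pi]%classic x -> 0 <= (sin x - 3 / 4) * (sin x - 3 / 4).
  by move=> x _; rewrite -expr2 sqr_ge0.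
move=> /(_ H0) H.
rewrite !(mul0r, mulr0, subr0, add0r, sub0r) in H.
lra.
Qed.


Lemma const_le (n : nat) (z : R) : (2 <= n)%N -> 0 <= z -> 1 / n%:R <= 1 - z ->
  2 * n.+1%:R / (pi * ((1 - z ^+ 2) `^ (1 / 4)) ^+ 2) <= n%:R `^ (3 / 2) / (1 - z ^+ 2) `^ (1 / 4).
Proof.
move=> n2 z0 hz.
have n0 : (0 : R) < n%:R by rewrite ltr0n; lia.
have n2' : (2 : R) <= n%:R by rewrite ler_nat.
have hz' : 1 <= n%:R * (1 - z).
  have e : n%:R * (1 / n%:R) = 1 :> R by rewrite div1r mulfV // gt_eqF.
  by apply: (le_trans (_ : 1 <= n%:R * (1 / n%:R))); [rewrite e | rewrite ler_wpM2l // ltW].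
have z1 : z < 1.
  have : 0 < 1 - z by apply: lt_le_trans hz; rewrite divr_gt0.
  by rewrite subr_gt0.
set y := 1 - z ^+ 2.
have y0 : 0 < y by rewrite /y subr_gt0 expr_lt1.
have ny : 2 <= n%:R ^+ 2 * y.
  have : 1 - z <= y by rewrite /y; nra.
  nra.
set u := y `^ (1 / 4).
set v := n%:R `^ (2^-1) : R.
have u0 : 0 < u by apply: powR_gt0.
have v0 : 0 < v by apply: powR_gt0.
have u4 : u ^+ 4 = y.
  by rewrite /u -powR_mulrn ?powR_ge0 // -powRrM (_ : 1 / 4 * 4%:R = 1) ?powRr1 ?ltW //; field.
have v2 : v ^+ 2 = n%:R.
  by rewrite /v -powR_mulrn ?powR_ge0 // -powRrM (_ : 2^-1 * 2%:R = 1) ?powRr1 ?ltW //; field.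
have e32 : n%:R `^ (3 / 2) = n%:R * v.
  rewrite (_ : 3 / 2 = 1 + 2^-1); last by field.
  by rewrite powRD ?powRr1 ?ltW //; apply/implyP => _; rewrite gt_eqF.
rewrite e32.
set w := v * u.
have w0 : 0 <= w by rewrite /w mulr_ge0 // ltW.
have w4 : 2 <= w ^+ 4 by rewrite /w exprMn u4 (_ : 4 = 2 * 2)%N // exprM v2.
have w1 : 15 / 14 <= w.
  rewrite -(ler_pXn2r (_ : (0 < 4)%N)) ?nnegrE //; last by lra.
have pi3 := pi_ge.
have pg := @pi_gt0 R.
rewrite ler_pdivrMr; last by rewrite mulr_gt0 // exprn_gt0.
rewrite mulrAC ler_pdivlMr //.
have -> : n%:R * v * (pi * u ^+ 2) = (n%:R * pi * w) * u by rewrite /w; ring.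
rewrite ler_wpM2r ?(ltW u0) // -natr1.
have : 3 <= pi * w.
  have : 14 / 5 * (15 / 14) <= pi * w by apply: ler_pM => //; lra.
  lra.
nra.
Qed.

End S.

Theorem theoremA1 (R : realType) (n : nat) (Omega : set R) (s zeta : R)
  (p : {poly R}) :
  (1 <= n)%N ->
  measurable Omega ->
  Omega `<=` `[(-1)%R, 1%R]%classic ->
  (@lebesgue_measure R Omega = s%:E) ->
  (exists2 x, Omega x & `|x| = zeta) ->
  (forall x, Omega x -> `|x| <= zeta) ->
  1 / n%:R <= 1 - zeta ->
  (size p <= n.+1)%N ->
  (\int[@lebesgue_measure R]_(x in Omega) (`|p.[x]|)%:E <=
    (s * (n%:R `^ (3 / 2)) / ((1 - zeta ^+ 2) `^ (1 / 4)))%:E *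
    \int[@lebesgue_measure R]_(x in `[(-1)%R, 1%R]%classic) (`|p.[x]|)%:E)%E.
Proof.
move=> n1 mO Osub hmu [x1 Ox1 hx1] hz hzn hs.
have z0 : 0 <= zeta by rewrite -hx1.
have n0 : (0 : R) < n%:R by rewrite ltr0n.
have z1 : zeta < 1.
  have : 0 < 1 - zeta by apply: lt_le_trans hzn; rewrite divr_gt0.
  by rewrite subr_gt0.
set J := \int[lebesgue_measure]_(x in `[0, pi]) (`|p.[cos x]| * sin x).
have J0 : 0 <= J.
  apply: Rintegral_ge0 => x; rewrite /= in_itv /= => /andP [h1 h2].
  by rewrite mulr_ge0 // sin_ge0_pi // h1 h2.
rewrite -subst_cos -/J.
set y := 1 - zeta ^+ 2.
have y0 : 0 < y by rewrite /y subr_gt0 expr_lt1.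
set u := y `^ (1 / 4).
have u0 : 0 < u by apply: powR_gt0.
have u4 : u ^+ 4 = y.
  by rewrite /u -powR_mulrn ?powR_ge0 // -powRrM (_ : 1 / 4 * 4%:R = 1) ?powRr1 ?ltW //; field.
pose c := 2 * n.+1%:R / (pi * u ^+ 2).
have pg := @pi_gt0 R.
have hpt : forall x, Omega x -> `|p.[x]| <= c * J.
  move=> x Ox.
  have hxz := hz x Ox.
  have hx : -1 <= x <= 1.
    by rewrite -ler_norml (le_trans hxz) // ltW.
  have := pointwise p n x hs hx.
  have s0p : 0 <= sin (acos x) by apply: sin_ge0_pi; rewrite acos_ge0 // acos_lepi.
  have s02 : sin (acos x) ^+ 2 = 1 - x ^+ 2.
    by rewrite sin2cos2 acosK // in_itv /=.
  have x2 : x ^+ 2 <= zeta ^+ 2.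
    by rewrite -real_normK ?num_real // ler_pXn2r ?nnegrE.
  have s0ge : u ^+ 2 <= sin (acos x).
    rewrite -(ler_pXn2r (_ : (0 < 2)%N)) ?nnegrE ?exprn_ge0 ?(ltW u0) //.
    by rewrite -exprM /= u4 s02 /y lerB.
  move=> h.
  rewrite /c mulrAC ler_pdivlMr ?mulr_gt0 ?exprn_gt0 //.
  have h2 := ler_wpM2l (normr_ge0 p.[x]) s0ge.
  apply: (le_trans (_ : _ <= pi * (`|p.[x]| * sin (acos x)))).
    by rewrite mulrCA ler_wpM2l // ltW.
  have e : pi * (`|p.[x]| * sin (acos x)) = 2 * (pi / 2 * (`|p.[x]| * sin (acos x))) by field.
  by rewrite e -[in X in _ <= X]mulrA ler_wpM2l.
apply: (@le_trans _ _ (\int[lebesgue_measure]_(x in Omega) ((c * J)%:E))%E).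
  apply: (@ge0_le_integral _ _ _ lebesgue_measure Omega mO (fun x => (`|p.[x]|)%:E) (fun x => (c * J)%:E)).
  - by move=> x _; rewrite lee_fin normr_ge0.
  - apply/measurable_realfun.measurable_EFinP; apply: measurable_funTS.
    apply: measurable_realfun.continuous_measurable_fun; apply: cont_abs; exact: continuous_horner.
  - exact: measurable_cst.
  - by move=> x Ox; rewrite lee_fin hpt.
rewrite integral_cst // [X in (_ * X <= _)%E](_ : _ = s%:E) ?hmu // -!EFinM lee_fin.
have s0 : 0 <= s.
  have : (0 <= s%:E)%E by rewrite -hmu; exact: measure_ge0.
  by rewrite lee_fin.
have Js : 0 <= J * s by rewrite mulr_ge0.
case: (ltnP 1 n) => hn.
  have hK := const_le n zeta hn z0 hzn.
  rewrite -/y -/u -/c in hK.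
  nra.
have zeta0 : zeta = 0.
  have n1' : n = 1%N by lia.
  move: hzn; rewrite n1' divr1 => h; apply/eqP; rewrite eq_le z0 andbT; lra.
have -> : s = 0.
  have : lebesgue_measure Omega = 0%E.
    apply: (@subset_measure0 _ _ _ (@lebesgue_measure R) Omega [set 0] mO (measurable_set1 0)).
    - by move=> x Ox; have := hz x Ox; rewrite zeta0 normr_le0 => /eqP ->.
    - exact: lebesgue_measure_set1.
  by rewrite hmu => -[].
by rewrite !(mulr0, mul0r).
Qed.
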